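(* Let $H$ be an undirected graph and let $I$ be an induced minor of $H$. Then $\mathrm{dtw}(I)\le\mathrm{dtw}(H)$.
   Context: A graph $I$ is an induced minor of $H$ if it can be obtained from $H$ by deleting vertices and contracting edges. For a DAG $\vec H$, a source is a vertex of in-degree $0$; $S$ denotes the set of sources; $R(s)$ is the set of vertices reachable from $s$, and $R(B)=\bigcup_{s\in B}R(s)$. A DAG tree decomposition of $\vec H$ is a tree $T$ whose nodes (bags) are subsets of $S$ such that every source lies in some bag and, for any bags $B,B_1,B_2$ with $B$ on the path between $B_1$ and $B_2$ in $T$, $R(B_1)\cap R(B_2)\subseteq R(B)$; its width is the maximum bag size and $\mathrm{dtw}(\vec H)$ is the minimum width. For an undirected graph, $\mathrm{dtw}$ is the maximum of $\mathrm{dtw}(\vec H)$ over all its acyclic orientations $\vec H$. *)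

(* Defs.v *)
From mathcomp Require Import all_boot.
From Stdlib Require Import ClassicalEpsilon.
Set Implicit Arguments. Unset Strict Implicit. Unset Printing Implicit Defensive.

(** Finite (undirected) graphs: a vertex set inside a finite ambient type and
    an adjacency relation; only adjacencies between vertices of [verts] count. *)
Record graph (T : finType) := Graph { verts : {set T}; adj : rel T }.

Definition edge (T : finType) (G : graph T) (x y : T) : bool :=
  [&& x \in verts G, y \in verts G & adj G x y].

Definition simple_graph (T : finType) (G : graph T) : Prop :=
  (forall x y, edge G x y = edge G y x) /\ (forall x, ~~ edge G x x).

Definition delete_vertex (T : finType) (G : graph T) (v : T) : graph T :=
  Graph (verts G :\ v) (adj G).

(** contracting the edge uv: v is merged into u *)
Definition contract_edge (T : finType) (G : graph T) (u v : T) : graph T :=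
  Graph (verts G :\ v)
        (fun x y => (x != y) &&
           [|| adj G x y, (x == u) && adj G v y | (y == u) && adj G x v]).

Inductive minor_step (T : finType) (G : graph T) : graph T -> Prop :=
  | MS_del v : v \in verts G -> minor_step G (delete_vertex G v)
  | MS_con u v : edge G u v -> minor_step G (contract_edge G u v).

Inductive del_con_seq (T : finType) : graph T -> graph T -> Prop :=
  | DC_refl G : del_con_seq G G
  | DC_step G G' G'' : minor_step G G' -> del_con_seq G' G'' -> del_con_seq G G''.

Definition graph_iso (U T : finType) (G1 : graph U) (G2 : graph T) : Prop :=
  exists phi : U -> T,
    [/\ {in verts G1 &, injective phi},
        phi @: verts G1 = verts G2 &
        {in verts G1 &, forall x y, edge G1 x y = edge G2 (phi x) (phi y)}].

Definition induced_minor (U T : finType) (I : graph U) (H : graph T) : Prop :=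
  exists H' : graph T, del_con_seq H H' /\ graph_iso I H'.

Definition acyclic_orientation (T : finType) (G : graph T) (D : rel T) : Prop :=
  [/\ forall x y, D x y -> edge G x y,
      forall x y, edge G x y -> D x y || D y x,
      forall x y, D x y -> ~~ D y x &
      forall x y, D x y -> ~~ connect D y x].

Definition sources (T : finType) (G : graph T) (D : rel T) : {set T} :=
  [set s in verts G | [forall x, ~~ D x s]].

Definition reach (T : finType) (D : rel T) (s : T) : {set T} :=
  [set x | connect D s x].

Definition reachB (T : finType) (D : rel T) (B : {set T}) : {set T} :=
  \bigcup_(s in B) reach D s.

Definition is_tree (K : finType) (te : rel K) : Prop :=
  [/\ 0 < #|K|, symmetric te, irreflexive te,
      forall x y, connect te x y &
      forall x p q, path te x p -> path te x q -> uniq (x :: p) -> uniq (x :: q) ->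
        last x p = last x q -> p = q].

Definition on_path (K : finType) (te : rel K) (k1 k2 b : K) : Prop :=
  exists p, [/\ path te k1 p, last k1 p = k2, uniq (k1 :: p) & b \in k1 :: p].

Definition dag_tree_decomposition (T : finType) (G : graph T) (D : rel T)
    (K : finType) (te : rel K) (bag : K -> {set T}) : Prop :=
  [/\ is_tree te,
      forall k, bag k \subset sources G D,
      forall s, s \in sources G D -> exists k, s \in bag k &
      forall b k1 k2, on_path te k1 k2 b ->
        reachB D (bag k1) :&: reachB D (bag k2) \subset reachB D (bag b)].

Definition dtd_width (K : finType) (T : finType) (bag : K -> {set T}) : nat :=
  \max_(k : K) #|bag k|.

Definition dag_dtw_le (T : finType) (G : graph T) (D : rel T) (k : nat) : Prop :=
  exists (K : finType) (te : rel K) (bag : K -> {set T}),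
    dag_tree_decomposition G D te bag /\ dtd_width bag <= k.

Definition dtw_le (T : finType) (G : graph T) (k : nat) : Prop :=
  forall D, acyclic_orientation G D -> dag_dtw_le G D k.

Definition dtw_leb (T : finType) (G : graph T) (k : nat) : bool :=
  if excluded_middle_informative (dtw_le G k) then true else false.

Lemma dtw_leb_exists (T : finType) (G : graph T) : exists k, dtw_leb G k.
Proof.
exists #|T|; rewrite /dtw_leb; case: excluded_middle_informative => // [[]].
move=> D HD; exists unit, (fun _ _ => false), (fun _ => sources G D); split.
- split.
  + split.
    * by apply/card_gt0P; exists tt.
    * by move=> [] [].
    * by move=> [].
    * by case; case; rewrite connect0.
    * by move=> x [|? ?] [|? ?].
  + by [].
  + by move=> s Hs; exists tt.
  + by move=> [] [] [] _; rewrite setIid.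
- by rewrite /dtd_width (big_pred1 tt) // max_card.
Qed.

(** dtw(G) = max over acyclic orientations D of dtw(D)
           = least k such that every acyclic orientation has dtw <= k *)
Definition dtw (T : finType) (G : graph T) : nat := ex_minn (dtw_leb_exists G).

(* Main.v *)
Require Import Defs.
From mathcomp Require Import all_boot.
From Stdlib Require Import ClassicalEpsilon.
Set Implicit Arguments. Unset Strict Implicit. Unset Printing Implicit Defensive.

Section Gen.
Variable T : finType.

Lemma connect_rec (D : rel T) (x : T) (Q : T -> Prop) :
  Q x -> (forall s t, D s t -> connect D t x -> Q t -> Q s) ->
  forall s, connect D s x -> Q s.
Proof.
move=> Qx IH s /connectP [p]; elim: p s => [|t p IHp] s /=.
  by move=> _ <-.
move=> /andP[Dst pt] ex; apply: (IH _ _ Dst) (IHp t pt ex).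
by apply/connectP; exists p.
Qed.

Lemma reach_verts (G : graph T) (D : rel T) s x :
  (forall a b, D a b -> edge G a b) -> s \in verts G -> connect D s x -> x \in verts G.
Proof.
move=> HD Hs Hc; move: Hc Hs; apply: (connect_rec (Q := fun s => s \in verts G -> x \in verts G)) => //.
move=> a b /HD /and3P[_ Hb _] _ IH _; exact: IH.
Qed.

Lemma inreachB (D : rel T) (B : {set T}) x : reflect (exists2 s, s \in B & connect D s x) (x \in reachB D B).
Proof.
apply: (iffP bigcupP) => [[s Hs]|[s Hs Hc]]; first by rewrite inE => Hc; exists s.
by exists s => //; rewrite inE.
Qed.

Lemma source_above (G : graph T) D y :
  acyclic_orientation G D -> y \in verts G ->
  exists2 s, s \in sources G D & connect D s y.
Proof.
case=> HE _ _ Hac.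
suff: forall n y, #|[set z | connect D z y]| <= n -> y \in verts G ->
  exists2 s, s \in sources G D & connect D s y by apply.
elim=> [|n IH] {}y.
  rewrite leqn0 cards_eq0 => /eqP E; have := in_set0 y.
  by rewrite -E inE connect0.
move=> Hc Hy.
case Hsrc: [forall x, ~~ D x y].
  by exists y; [rewrite inE Hy Hsrc | exact: connect0].
move/negbT/forallPn: Hsrc => [x]; rewrite negbK => Dxy.
have Hx : x \in verts G by case/and3P: (HE _ _ Dxy).
have Hprop : [set z | connect D z x] \proper [set z | connect D z y].
  apply/properP; split.
    apply/subsetP => z; rewrite !inE => Hz; apply: connect_trans Hz (connect1 Dxy).
  by exists y; rewrite !inE ?connect0 //; apply: Hac.
have [s Hs Hsx] := IH x (leq_trans (proper_card Hprop) Hc) Hx.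
by exists s => //; apply: connect_trans Hsx (connect1 Dxy).
Qed.

End Gen.

Section Tree.
Variable K : finType.
Variable te : rel K.

Definition convex (P : K -> Prop) :=
  forall b k1 k2, on_path te k1 k2 b -> P k1 -> P k2 -> P b.

Lemma uniq_path_of k1 k2 : connect te k1 k2 ->
  exists p, [/\ path te k1 p, last k1 p = k2 & uniq (k1 :: p)].
Proof.
move=> /connectP [p Hp ->]; case: (shortenP Hp) => p' Hp' Hu _.
by exists p'.
Qed.

Lemma convex_mixed (A B : K -> Prop) k0 k1 k2 b :
  is_tree te -> convex A -> convex B -> A k0 -> B k0 -> A k1 -> B k2 ->
  on_path te k1 k2 b -> A b \/ B b.
Proof.
case=> _ _ _ Hconn Huniq cA cB A0 B0 A1 B2 [p [Hp Hl Hu Hb]].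
have [p1 [Hp1 Hl1 Hu1]] := uniq_path_of (Hconn k1 k0).
have [p2 [Hp2 Hl2 Hu2]] := uniq_path_of (Hconn k0 k2).
have HA : forall c, c \in k1 :: p1 -> A c.
  by move=> c Hc; apply: (cA c k1 k0) => //; exists p1.
have HB : forall c, c \in k0 :: p2 -> B c.
  by move=> c Hc; apply: (cB c k0 k2) => //; exists p2.
have Hq : path te k1 (p1 ++ p2) by rewrite cat_path Hp1 Hl1 Hp2.
have Hlq : last k1 (p1 ++ p2) = k2 by rewrite last_cat Hl1 Hl2.
move: Hlq; case: (shortenP Hq) => p' Hp' Hu' Hsub Hl'.
have Ep : p' = p by apply: (Huniq k1) => //; rewrite Hl Hl'.
move: Hb; rewrite -Ep inE => /orP[/eqP->|Hb]; first by left; apply: HA; exact: mem_head.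
have := Hsub _ Hb; rewrite mem_cat => /orP[H|H].
  by left; apply: HA; rewrite inE H orbT.
by right; apply: HB; rewrite inE H orbT.
Qed.

Lemma convex_union (A B : K -> Prop) k0 :
  is_tree te -> convex A -> convex B -> A k0 -> B k0 -> convex (fun k => A k \/ B k).
Proof.
move=> Ht cA cB A0 B0 b k1 k2 Hb [A1|B1] [A2|B2].
- by left; apply: (cA b k1 k2).
- exact: (convex_mixed Ht cA cB A0 B0 A1 B2 Hb).
- by apply/or_comm; exact: (convex_mixed Ht cB cA B0 A0 B1 A2 Hb).
- by right; apply: (cB b k1 k2).
Qed.

Lemma convex_ext (A B : K -> Prop) : (forall k, A k <-> B k) -> convex A -> convex B.
Proof. by move=> E cA b k1 k2 Hb /E H1 /E H2; apply/E; apply: (cA b k1 k2). Qed.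

End Tree.

Lemma dtd_convex (T K : finType) (G : graph T) D (te : rel K) bag :
  dag_tree_decomposition G D te bag ->
  forall x, convex te (fun k => x \in reachB D (bag k)).
Proof.
case=> _ _ _ H x b k1 k2 Hb H1 H2; apply: (subsetP (H b k1 k2 Hb)); by rewrite inE H1 H2.
Qed.

Lemma dtd_of_convex (T K : finType) (G : graph T) D (te : rel K) (bag : K -> {set T}) :
  is_tree te -> (forall k, bag k \subset sources G D) ->
  (forall s, s \in sources G D -> exists k, s \in bag k) ->
  (forall x, convex te (fun k => x \in reachB D (bag k))) ->
  dag_tree_decomposition G D te bag.
Proof.
move=> Ht Hb Hc Hx; split => // b k1 k2 Hp; apply/subsetP => x.
rewrite inE => /andP[H1 H2]; exact: (Hx x b k1 k2 Hp H1 H2).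
Qed.

Section Del.
Variables (T : finType) (G : graph T) (v : T).
Hypothesis Hv : v \in verts G.
Hypothesis Hs : simple_graph G.
Variable D' : rel T.
Hypothesis HD' : acyclic_orientation (delete_vertex G v) D'.

Definition delD : rel T := fun a b => D' a b || ((b == v) && edge G a v).

Lemma edge_del a b : edge (delete_vertex G v) a b = [&& a != v, b != v & edge G a b].
Proof.
rewrite /edge /= !in_setD1.
by case: (a != v); case: (b != v); rewrite /= ?andbF.
Qed.

Lemma D'_edge a b : D' a b -> [&& a != v, b != v & edge G a b].
Proof. by case: HD' => HE _ _ _ /HE; rewrite edge_del. Qed.

Lemma delD_vout c : delD v c = false.
Proof.
rewrite /delD; case E: (D' v c); first by have := D'_edge E; rewrite eqxx.
by case: Hs => _ Hl; rewrite (negbTE (Hl v)) andbF.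
Qed.

Lemma del_reach_v x : connect delD v x -> x = v.
Proof.
move=> H; apply: (@connect_rec _ delD x (fun s => s = v -> x = v) _ _ v H) => // s t Dst _ _ Esv.
by rewrite Esv delD_vout in Dst.
Qed.

Lemma del_reach s x : x != v -> connect delD s x -> connect D' s x.
Proof.
move=> Hx H; apply: (@connect_rec _ delD x (fun s => connect D' s x) _ _ s H) => // a t Dat Ct IH.
case/orP: Dat => [Dat|/andP[/eqP Etv _]]; first exact: connect_trans (connect1 Dat) IH.
by move: Ct; rewrite Etv => /del_reach_v Exv; rewrite Exv eqxx in Hx.
Qed.

Lemma del_reach' s x : connect D' s x -> connect delD s x.
Proof.
move=> H; apply: (@connect_rec _ D' x (fun s => connect delD s x) _ _ s H) => // a t Dat _ IH.
by apply: connect_trans IH; apply: connect1; rewrite /delD Dat.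
Qed.

Lemma delD_orient : acyclic_orientation G delD.
Proof.
case: Hs => Hsym Hl; case: HD' => HE Htot Hanti Hac.
split.
- move=> a b /orP[/D'_edge/and3P[_ _ //]|/andP[/eqP-> //]].
- move=> a b Eab; case Ea: (a == v).
    move/eqP: Ea => Ea; subst a; apply/orP; right.
    by rewrite /delD eqxx -Hsym Eab orbT.
  case Eb: (b == v); first by rewrite /delD Eb -(eqP Eb) Eab orbT.
  have : edge (delete_vertex G v) a b by rewrite edge_del Ea Eb Eab.
  by move/Htot => /orP[H|H]; rewrite /delD H ?orbT.
- move=> a b /orP[Dab|/andP[/eqP Eb Eav]].
    have := D'_edge Dab => /and3P[Ha _ _].
    rewrite /delD negb_or (negbTE (Hanti _ _ Dab)) /=.
    by rewrite (negbTE Ha).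
  by subst b; rewrite delD_vout.
- move=> a b /orP[Dab|/andP[/eqP Eb Eav]].
    apply/negP => Cba.
    have := D'_edge Dab => /and3P[Ha _ _].
    by have := Hac _ _ Dab; rewrite (del_reach Ha Cba).
  subst b; apply/negP => /del_reach_v Eav'; subst a.
  by rewrite (negbTE (Hl v)) in Eav.
Qed.

Lemma del_sources s : s \in sources (delete_vertex G v) D' -> s \in sources G delD.
Proof.
rewrite !inE /= => /andP[/andP[Hsv ->] /forallP H] /=.
apply/forallP => x; rewrite /delD negb_or H /= negb_and.
by rewrite Hsv.
Qed.

Lemma del_sources' s : s \in sources G delD -> s != v -> s \in sources (delete_vertex G v) D'.
Proof.
rewrite !inE /= => /andP[-> /forallP H] -> /=.
apply/forallP => x; have := H x; rewrite /delD negb_or => /andP[-> _] //.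
Qed.

Lemma del_dtw m : dag_dtw_le G delD m -> dag_dtw_le (delete_vertex G v) D' m.
Proof.
case=> K [te [bag [[Ht Hsub Hcov Hcond] Hw]]].
have Hdtd : dag_tree_decomposition G delD te bag by split.
set S' := sources (delete_vertex G v) D'.
exists K, te, (fun k => bag k :&: S'); split.
  apply: dtd_of_convex => //.
  - by move=> k; apply: subsetIr.
  - move=> s Hs1; have [k Hk] := Hcov _ (del_sources Hs1).
    by exists k; rewrite inE Hk Hs1.
  - move=> x; case Exv: (x == v).
      move=> b k1 k2 _ /inreachB [s Hs0 Hc].
      exfalso; move: Hs0; rewrite inE => /andP[_ Hs0].
      have Hsv : s \in verts (delete_vertex G v) by move: Hs0; rewrite inE => /andP[].
      have : x \in verts (delete_vertex G v).
        by apply: reach_verts Hsv Hc; case: HD'.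
      by rewrite /= in_setD1 Exv.
    apply: (convex_ext (A := fun k => x \in reachB delD (bag k))); last exact: dtd_convex Hdtd x.
    move=> k; split.
      move/inreachB => [s Hs0 Hc]; apply/inreachB.
      have Hsv : s != v.
        by apply/negP => /eqP Esv; subst s; move: (del_reach_v Hc) => E; rewrite E eqxx in Exv.
      exists s; last by apply: del_reach => //; rewrite Exv.
      rewrite inE Hs0 /=; apply: del_sources' Hsv.
      exact: (subsetP (Hsub k)).
    move/inreachB => [s Hs0 Hc]; apply/inreachB; exists s; last exact: del_reach'.
    by move: Hs0; rewrite inE => /andP[].
rewrite /dtd_width; apply/bigmax_leqP => k _.
apply: leq_trans (subset_leq_card (subsetIl _ _)) _.
by move/bigmax_leqP: Hw; apply.
Qed.

End Del.

Section Con.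
Variables (T : finType) (G : graph T) (u v : T).
Hypothesis Huv : edge G u v.
Hypothesis Hs : simple_graph G.
Variable D' : rel T.
Hypothesis HD' : acyclic_orientation (contract_edge G u v) D'.
Variables (t b : T).
Hypothesis Htb : (t = u /\ b = v) \/ (t = v /\ b = u).
Hypothesis Htop : (t == v) = [exists y, D' y u && edge G y v].

Definition pi (y : T) := if y == v then u else y.

Definition conD : rel T := fun a c => edge G a c &&
  (if (a == t) && (c == b) then true else if (a == b) && (c == t) then false
   else D' (pi a) (pi c)).

Definition sp a c := ((a == u) && (c == v)) || ((a == v) && (c == u)).

Lemma Hu : u \in verts G. Proof. by case/and3P: Huv. Qed.
Lemma Hv : v \in verts G. Proof. by case/and3P: Huv. Qed.
Lemma Hadj : adj G u v. Proof. by case/and3P: Huv. Qed.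
Lemma Hneq : u != v.
Proof. by apply/negP => /eqP E; case: Hs => _ Hl; have := Hl u; rewrite {2}E Huv. Qed.

Lemma pi_v : pi v = u. Proof. by rewrite /pi eqxx. Qed.
Lemma pi_nv a : a != v -> pi a = a. Proof. by rewrite /pi => /negbTE->. Qed.
Lemma pi_u : pi u = u. Proof. exact: pi_nv Hneq. Qed.
Lemma pi_t : pi t = u. Proof. by case: Htb => [[-> _]|[-> _]]; rewrite ?pi_u ?pi_v. Qed.
Lemma pi_b : pi b = u. Proof. by case: Htb => [[_ ->]|[_ ->]]; rewrite ?pi_u ?pi_v. Qed.

Lemma spE a c : sp a c = ((a == t) && (c == b)) || ((a == b) && (c == t)).
Proof. by rewrite /sp; case: Htb => [[-> ->]|[-> ->]] //; rewrite orbC. Qed.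

Lemma edge_sym a c : edge G a c = edge G c a.
Proof. by case: Hs => H _; apply: H. Qed.

Lemma Htb_edge : edge G t b.
Proof. by case: Htb => [[-> ->]|[-> ->]] //; rewrite edge_sym. Qed.

Lemma conD_tb : conD t b.
Proof. by rewrite /conD Htb_edge !eqxx. Qed.

Lemma Htbneq : t != b.
Proof. case: Htb => [[-> ->]|[-> ->]]; [exact: Hneq | by rewrite eq_sym Hneq]. Qed.

Lemma conD_bt : conD b t = false.
Proof.
by rewrite /conD [b == t]eq_sym (negbTE Htbneq) /= !eqxx /= andbF.
Qed.

Lemma conD_gen a c : ~~ sp a c -> conD a c = edge G a c && D' (pi a) (pi c).
Proof. by rewrite spE negb_or /conD => /andP[/negbTE-> /negbTE->]. Qed.

Lemma edge_con a c : edge (contract_edge G u v) a c =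
  [&& a != v, a \in verts G, c != v, c \in verts G, a != c &
      [|| adj G a c, (a == u) && adj G v c | (c == u) && adj G a v]].
Proof. by rewrite /edge /= !in_setD1 -!andbA. Qed.

Lemma lift a c : D' a c -> [\/ conD a c, (a = u /\ conD v c) | (c = u /\ conD a v)].
Proof.
move=> Dac; case: HD' => HE _ _ _; move: (HE _ _ Dac); rewrite edge_con.
case/and5P => Hav Ha Hcv Hc /andP[Hac /or3P[Hadj'|/andP[/eqP Eau Hvc]|/andP[/eqP Ecu Hav']]].
- apply: Or31; rewrite conD_gen ?pi_nv //.
    by rewrite /edge Ha Hc Hadj'.
  by rewrite /sp (negbTE Hav) (negbTE Hcv) !andbF.
- subst a; apply: Or32; split => //.
  have Hcu : c != u by rewrite eq_sym.
  rewrite conD_gen ?pi_v ?pi_nv //.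
    by rewrite /edge Hv Hc Hvc.
  by rewrite /sp eq_sym (negbTE Hneq) (negbTE Hcu) !andbF.
- subst c; apply: Or33; split => //.
  rewrite conD_gen ?pi_v ?pi_nv //.
    by rewrite /edge Hv Ha Hav'.
  by rewrite /sp (negbTE Hac) (negbTE Hav).
Qed.

Lemma proj a c : conD a c -> pi a = pi c \/ D' (pi a) (pi c).
Proof.
case Esp: (sp a c).
  by move: Esp; rewrite /sp => /orP[/andP[/eqP-> /eqP->]|/andP[/eqP-> /eqP->]] _; left; rewrite pi_u pi_v.
by rewrite conD_gen ?Esp // => /andP[_ H]; right.
Qed.

Lemma proj_connect s x : connect conD s x -> connect D' (pi s) (pi x).
Proof.
move=> H; apply: (@connect_rec _ conD x (fun s => connect D' (pi s) (pi x)) _ _ s H) => //.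
move=> a c Dac _ IH; case: (proj Dac) => [->|H'] //.
exact: connect_trans (connect1 H') IH.
Qed.

Lemma loopless a : ~~ edge G a a. Proof. by case: Hs. Qed.

Lemma edge_pi a c : edge G a c -> ~~ sp a c -> edge (contract_edge G u v) (pi a) (pi c).
Proof.
move=> Eac; have Hac : a != c by apply/negP => /eqP E; subst c; rewrite (negbTE (loopless a)) in Eac.
case/and3P: (Eac) => Ha Hc Hadj'.
rewrite /sp negb_or => /andP[H1 H2].
rewrite edge_con; case Eav: (a == v); case Ecv: (c == v).
- by rewrite (eqP Eav) (eqP Ecv) eqxx in Hac.
- move/eqP: Eav => Eav; subst a; rewrite pi_v pi_nv ?Ecv //.
  have Hcu : c != u by move: H2; rewrite eqxx.
  by rewrite Hneq Hu Hc [u == c]eq_sym Hcu eqxx Hadj' orbT.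
- move/eqP: Ecv => Ecv; subst c; rewrite pi_v pi_nv ?Eav //.
  have Hau : a != u by move: H1; rewrite eqxx andbT.
  by rewrite Hneq Hu Ha Hau eqxx Hadj' !orbT.
- by rewrite !pi_nv ?Eav ?Ecv // Ha Hc Hac Hadj'.
Qed.

Lemma sp_sym a c : sp a c = sp c a.
Proof. by rewrite /sp orbC; case: (a == u); case: (a == v); case: (c == u); case: (c == v). Qed.

Lemma connect_first (D : rel T) x y : connect D x y -> x != y -> exists2 z, D x z & connect D z y.
Proof.
move=> H; apply: (@connect_rec _ D y (fun s => s != y -> exists2 z, D s z & connect D z y) _ _ x H).
  by rewrite eqxx.
by move=> s z Dsz Cz _ _; exists z.
Qed.

Lemma conD_orient : acyclic_orientation G conD.
Proof.
case: HD' => HE Htot Hanti Hac.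
split.
- by move=> a c /andP[].
- move=> a c Eac; case Esp: (sp a c).
    move: Esp; rewrite spE => /orP[/andP[/eqP-> /eqP->]|/andP[/eqP-> /eqP->]].
      by rewrite conD_tb.
    by rewrite conD_tb orbT.
  rewrite conD_gen ?Esp // conD_gen; last by rewrite sp_sym Esp.
  rewrite Eac edge_sym Eac /=; apply: Htot; exact: edge_pi (negbT Esp).
- move=> a c; case Esp: (sp a c).
    move: Esp; rewrite spE => /orP[/andP[/eqP-> /eqP->]|/andP[/eqP-> /eqP->]].
      by rewrite conD_bt.
    by rewrite conD_bt.
  rewrite conD_gen ?Esp // conD_gen; last by rewrite sp_sym Esp.
  move=> /andP[_ H]; rewrite negb_and (Hanti _ _ H) orbT //.
- move=> a c; case Esp: (sp a c).
    move: Esp; rewrite spE => /orP[/andP[/eqP-> /eqP->]|/andP[/eqP-> /eqP->]]; last by rewrite conD_bt.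
    move=> _; apply/negP => Cbt.
    have Hbt : b != t by rewrite eq_sym Htbneq.
    have [d Dbd Cdt] := connect_first Cbt Hbt.
    have Hdt : d != t by apply/negP => /eqP E; subst d; rewrite conD_bt in Dbd.
    have Hdb : d != b.
      by apply/negP => /eqP E; subst d; move: Dbd => /andP[]; rewrite (negbTE (loopless b)).
    have Hdn : ~~ sp b d by rewrite spE (negbTE Hdb) (negbTE Hdt) !andbF.
    have Hduv : d != v by case: Htb Hdt Hdb => [[-> ->] _ H|[-> ->] H _].
    move: Dbd; rewrite conD_gen // pi_b pi_nv // => /andP[_ Dud].
    have := proj_connect Cdt; rewrite pi_t pi_nv // => Cdu.
    by have := Hac _ _ Dud; rewrite Cdu.
  rewrite conD_gen ?Esp // => /andP[_ H]; apply/negP => /proj_connect C.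
  by have := Hac _ _ H; rewrite C.
Qed.


Lemma Ht_verts : t \in verts G.
Proof. by case: Htb => [[-> _]|[-> _]]; [exact: Hu | exact: Hv]. Qed.

Lemma reach_b z : z = u \/ z = v -> connect conD z b.
Proof.
have H1 := connect1 conD_tb.
by case: Htb => [[Et Eb]|[Et Eb]] [->|->]; rewrite -?Et -?Eb ?connect0.
Qed.

Lemma reach_t z : z = u \/ z = v -> connect conD t z.
Proof.
have H1 := connect1 conD_tb.
by case: Htb => [[Et Eb]|[Et Eb]] [->|->]; rewrite -?Et -?Eb ?connect0.
Qed.

Lemma F2 s x : connect D' s x -> connect conD s x \/ (connect conD s b /\ connect D' u x).
Proof.
move=> H; apply: (@connect_rec _ D' x
  (fun s => connect conD s x \/ (connect conD s b /\ connect D' u x)) _ _ s H).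
  by left; exact: connect0.
move=> a c Dac Ccx IH; case: (lift Dac) => [C|[Eau C]|[Ecu C]].
- case: IH => [H1|[H1 H2]]; first by left; exact: connect_trans (connect1 C) H1.
  by right; split => //; exact: connect_trans (connect1 C) H1.
- right; split; first by rewrite Eau; apply: reach_b; left.
  by rewrite -Eau; exact: connect_trans (connect1 Dac) Ccx.
- right; split; first by apply: connect_trans (connect1 C) (reach_b _); right.
  by rewrite -Ecu.
Qed.

Lemma F3 x : connect D' u x -> connect conD u x \/ connect conD v x.
Proof.
move=> H.
suff : [\/ connect conD u x, connect conD v x | connect conD u x] by case=> H'; auto.
apply: (@connect_rec _ D' x
  (fun s => [\/ connect conD s x, connect conD v x | connect conD u x]) _ _ u H).
  by apply: Or31; exact: connect0.
move=> a c Dac Ccx IH; case: (lift Dac) => [C|[Eau C]|[Ecu C]].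
- case: IH => [H1|H1|H1]; [apply: Or31; exact: connect_trans (connect1 C) H1 | exact: Or32 | exact: Or33].
- case: IH => [H1|H1|H1]; [apply: Or32; exact: connect_trans (connect1 C) H1 | exact: Or32 | exact: Or33].
- subst c; case: IH => [H1|H1|H1]; [exact: Or33 | exact: Or32 | exact: Or33].
Qed.

Lemma src1 s : s \in sources G conD -> s \in sources (contract_edge G u v) D'.
Proof.
rewrite !inE /= => /andP[Hsv /forallP H].
have Hs_v : s != v.
  apply/negP => /eqP E; subst s; case Etv: (t == v).
    have := Htop; rewrite Etv => /esym/existsP [y /andP[Dyu Eyv]].
    have : edge (contract_edge G u v) y u by case: HD' => HE _ _ _; apply: HE.
    rewrite edge_con => /and5P[Hyv _ _ _ /andP[Hyu _]].
    have := H y; rewrite conD_gen; last by rewrite /sp (negbTE Hyu) (negbTE Hyv).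
    by rewrite Eyv pi_v pi_nv // Dyu.
  have Eb : b = v by case: Htb Etv => [[_ ->]|[-> _]] //; rewrite eqxx.
  by have := H t; rewrite -Eb conD_tb.
rewrite Hs_v Hsv /=; apply/forallP => x; apply/negP => Dxs.
case: (lift Dxs) => [C|[_ C]|[Esu C]].
- by have := H x; rewrite C.
- by have := H v; rewrite C.
- subst s; case Etv: (t == v).
    have Eb : b = u by case: Htb Etv => [[Et _]|[_ ->]] //; rewrite Et (negbTE Hneq).
    by have := H t; rewrite -Eb conD_tb.
  have := Htop; rewrite Etv => /esym/negbT/existsPn /(_ x); rewrite Dxs /=.
  by case/andP: C => ->.
Qed.

Lemma src2 s : s \in sources (contract_edge G u v) D' -> s \in sources G conD.
Proof.
rewrite !inE /= => /andP[/andP[Hsv Hsverts] /forallP H].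
rewrite Hsverts /=; apply/forallP => x; apply/negP => Cxs.
case Esp: (sp x s).
  move: Esp; rewrite /sp (negbTE Hsv) andbF /= => /andP[/eqP Exv /eqP Esu]; subst x s.
  case: Htb => [[Et Eb]|[Et Eb]].
    by move: Cxs; rewrite -Et -Eb conD_bt.
  have := Htop; rewrite Et eqxx => /esym/existsP[y /andP[Dyu _]].
  by have := H y; rewrite Dyu.
move: Cxs; rewrite conD_gen ?Esp // (pi_nv Hsv) => /andP[_ D].
by have := H (pi x); rewrite D.
Qed.

Lemma con_dtw m : dag_dtw_le G conD m -> dag_dtw_le (contract_edge G u v) D' m.
Proof.
case=> K [te [bag [[Ht Hsub Hcov Hcond] Hw]]].
have Hdtd : dag_tree_decomposition G conD te bag by split.
have HE : forall x y, D' x y -> edge (contract_edge G u v) x y by case: HD'.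
exists K, te, bag; split => //.
apply: dtd_of_convex => //.
- by move=> k; apply/subsetP => s /(subsetP (Hsub k)); exact: src1.
- by move=> s /src2 /Hcov.
move=> x; case Hx: (x \in verts (contract_edge G u v)); last first.
  move=> b' k1 k2 _ /inreachB [s Hs0 Hc]; exfalso.
  have Hs1 := src1 (subsetP (Hsub k1) _ Hs0).
  have Hsv : s \in verts (contract_edge G u v) by move: Hs1; rewrite inE => /andP[].
  by have := reach_verts HE Hsv Hc; rewrite Hx.
have Hxv : x != v by move: Hx; rewrite /= in_setD1 => /andP[].
set c := connect D' u x.
have Heq : forall k, (x \in reachB conD (bag k) \/ (c /\ b \in reachB conD (bag k))) <->
   x \in reachB D' (bag k).
  move=> k; split.
    move=> [/inreachB [s Hs0 Hc] | [Hc' /inreachB [s Hs0 Hc]]]; apply/inreachB; exists s => //.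
      have Hsv : s != v.
        by have := src1 (subsetP (Hsub k) _ Hs0); rewrite !inE => /andP[/andP[Hq _] _].
      by have := proj_connect Hc; rewrite (pi_nv Hsv) (pi_nv Hxv).
    have Hsv : s != v.
      by have := src1 (subsetP (Hsub k) _ Hs0); rewrite !inE => /andP[/andP[Hq _] _].
    by have := proj_connect Hc; rewrite (pi_nv Hsv) pi_b => H; exact: connect_trans H Hc'.
  move/inreachB => [s Hs0 Hc]; case: (F2 Hc) => [H|[H1 H2]].
    by left; apply/inreachB; exists s.
  by right; split => //; apply/inreachB; exists s.
apply: (convex_ext Heq).
case Ec: c.
  apply: (convex_ext (A := fun k => x \in reachB conD (bag k) \/ b \in reachB conD (bag k))).
    by move=> k; split => [[H|H]|[H|[_ H]]]; auto.
  have [s0 Hs0 Cs0] := source_above conD_orient Ht_verts.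
  have Cs0b := connect_trans Cs0 (connect1 conD_tb).
  have Cs0x : connect conD s0 x.
    case: (F3 Ec) => H; apply: connect_trans (connect_trans Cs0 (reach_t _)) H; auto.
  have [k0 Hk0] := Hcov _ Hs0.
  apply: (convex_union (k0 := k0) Ht (dtd_convex (x := x) Hdtd) (dtd_convex (x := b) Hdtd)).
    by apply/inreachB; exists s0.
  by apply/inreachB; exists s0.
apply: (convex_ext (A := fun k => x \in reachB conD (bag k))).
  by move=> k; split => [H|[H|[]]]; auto.
exact: (dtd_convex (x := x) Hdtd).
Qed.

End Con.

Section Iso.
Variables (U T : finType) (I : graph U) (H : graph T) (phi : U -> T).
Hypothesis Hinj : {in verts I &, injective phi}.
Hypothesis Him : phi @: verts I = verts H.
Hypothesis Hed : {in verts I &, forall x y, edge I x y = edge H (phi x) (phi y)}.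
Variable DI : rel U.
Hypothesis HDI : acyclic_orientation I DI.

Definition DH : rel T := fun a c => [exists x, [exists y,
  [&& x \in verts I, y \in verts I, phi x == a, phi y == c & DI x y]]].

Lemma DI_verts x y : DI x y -> x \in verts I /\ y \in verts I.
Proof. by case: HDI => HE _ _ _ /HE /and3P[]. Qed.

Lemma DH_phi x y : DI x y -> DH (phi x) (phi y).
Proof.
move=> D; have [Hx Hy] := DI_verts D.
by apply/existsP; exists x; apply/existsP; exists y; rewrite Hx Hy !eqxx D.
Qed.

Lemma DH_inv a c : DH a c -> exists x y, [/\ x \in verts I, y \in verts I, a = phi x, c = phi y & DI x y].
Proof.
move=> /existsP [x /existsP [y /and5P [Hx Hy /eqP Ea /eqP Ec D]]].
by exists x, y.
Qed.

Lemma DH_inv_at x c : x \in verts I -> DH (phi x) c -> exists2 y, c = phi y & DI x y.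
Proof.
move=> Hx /DH_inv [x' [y [Hx' Hy E Ec D]]].
have Exx : x = x' by apply: Hinj.
by subst x'; exists y.
Qed.

Lemma connDI s x : connect DI s x -> connect DH (phi s) (phi x).
Proof.
move=> C; apply: (@connect_rec _ DI x (fun s => connect DH (phi s) (phi x)) _ _ s C) => //.
by move=> a c D _ IH; apply: connect_trans (connect1 (DH_phi D)) IH.
Qed.

Lemma connDH s c : s \in verts I -> connect DH (phi s) c -> exists2 x, c = phi x & connect DI s x.
Proof.
move=> Hs C.
have := @connect_rec _ DH c (fun a => forall s, s \in verts I -> a = phi s ->
   exists2 x, c = phi x & connect DI s x).
move=> /(_ _ _ (phi s) C s Hs erefl); apply.
  by move=> s' _ ->; exists s'.
move=> a d D _ IH s' Hs' Ea; subst a.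
have [y Ed Dy] := DH_inv_at Hs' D.
have [Hy _] := DI_verts Dy.
have [_ Hy'] := DI_verts Dy.
have [x Ex Cx] := IH y Hy' Ed.
by exists x => //; apply: connect_trans (connect1 Dy) Cx.
Qed.

Lemma connDH' s x : s \in verts I -> x \in verts I -> connect DH (phi s) (phi x) -> connect DI s x.
Proof.
move=> Hs Hx /(connDH Hs) [x' E C].
have Hx' : x' \in verts I by apply: reach_verts Hs C; case: HDI.
by rewrite (Hinj Hx Hx' E).
Qed.

Lemma verts_phi a : a \in verts H -> exists2 x, x \in verts I & a = phi x.
Proof. by rewrite -Him => /imsetP. Qed.

Lemma DH_orient : acyclic_orientation H DH.
Proof.
case: HDI => HE Htot Hanti Hac; split.
- move=> a c /DH_inv [x [y [Hx Hy -> -> D]]]; rewrite -Hed //; exact: HE.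
- move=> a c Eac.
  have [x Hx Ea] : exists2 x, x \in verts I & a = phi x by apply: verts_phi; case/and3P: Eac.
  have [y Hy Ec] : exists2 y, y \in verts I & c = phi y by apply: verts_phi; case/and3P: Eac.
  subst a c; move: Eac; rewrite -Hed // => /Htot /orP[D|D]; by rewrite (DH_phi D) ?orbT.
- move=> a c /DH_inv [x [y [Hx Hy -> -> D]]]; apply/negP => /(DH_inv_at Hy) [y' E D'].
  have Ex : x = y' by apply: Hinj => //; case: (DI_verts D').
  by subst y'; have := Hanti _ _ D; rewrite D'.
- move=> a c /DH_inv [x [y [Hx Hy -> -> D]]]; apply/negP => /(connDH' Hy Hx) C.
  by have := Hac _ _ D; rewrite C.
Qed.

Lemma iso_sources s : s \in verts I -> (s \in sources I DI) = (phi s \in sources H DH).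
Proof.
move=> Hs; rewrite !inE Hs -Him (imset_f phi Hs) /=.
apply/forallP/forallP => H1 z.
  apply/negP => /DH_inv [x [y [Hx Hy _ E D]]].
  have Eys : s = y by apply: Hinj.
  by subst y; have := H1 x; rewrite D.
by apply/negP => D; have := H1 (phi z); rewrite DH_phi.
Qed.

Lemma iso_dtw m : dag_dtw_le H DH m -> dag_dtw_le I DI m.
Proof.
case=> K [te [bag [[Ht Hsub Hcov Hcond] Hw]]].
have Hdtd : dag_tree_decomposition H DH te bag by split.
pose bag' k := [set x in verts I | phi x \in bag k].
exists K, te, bag'; split.
  apply: dtd_of_convex => //.
  - move=> k; apply/subsetP => x; rewrite inE => /andP[Hx Hk].
    by rewrite iso_sources //; apply: (subsetP (Hsub k)).
  - move=> s Hs.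
    have Hsv : s \in verts I by move: Hs; rewrite inE => /andP[].
    rewrite iso_sources // in Hs; have [k Hk] := Hcov _ Hs.
    by exists k; rewrite inE Hsv Hk.
  move=> x; case Hx: (x \in verts I); last first.
    move=> b k1 k2 _ /inreachB [s Hs0 Hc]; exfalso.
    have Hsv : s \in verts I by move: Hs0; rewrite inE => /andP[].
    have HE : forall a c, DI a c -> edge I a c by case: HDI.
    by have := reach_verts HE Hsv Hc; rewrite Hx.
  apply: (convex_ext (A := fun k => phi x \in reachB DH (bag k))); last exact: (dtd_convex (x := phi x) Hdtd).
  move=> k; split.
    move/inreachB => [s' Hs' C].
    have Hs'v : s' \in verts H by have := subsetP (Hsub k) _ Hs'; rewrite inE => /andP[].
    have [s Hs Es] := verts_phi Hs'v; subst s'.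
    by apply/inreachB; exists s; [rewrite inE Hs Hs' | exact: connDH'].
  move/inreachB => [s Hs C]; apply/inreachB; exists (phi s); last exact: connDI.
  by move: Hs; rewrite inE => /andP[].
rewrite /dtd_width; apply/bigmax_leqP => k _.
have Hsub' : bag' k \subset verts I by apply/subsetP => x; rewrite inE => /andP[].
have Hinj' : {in bag' k &, injective phi}.
  by move=> x y Hx Hy; apply: Hinj; [apply: (subsetP Hsub') | apply: (subsetP Hsub')].
rewrite -(card_in_imset Hinj').
have Hsb : phi @: bag' k \subset bag k.
  by apply/subsetP => a /imsetP [x]; rewrite inE => /andP[_ Hk] ->.
apply: leq_trans (subset_leq_card Hsb) _.
by move/bigmax_leqP: Hw; apply.
Qed.

End Iso.

Lemma adj_sym (T : finType) (G : graph T) a c : simple_graph G ->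
  a \in verts G -> c \in verts G -> adj G a c = adj G c a.
Proof. by case=> Hsym _ Ha Hc; have := Hsym a c; rewrite /edge Ha Hc. Qed.

Lemma simple_del (T : finType) (G : graph T) v : simple_graph G -> simple_graph (delete_vertex G v).
Proof.
move=> Hs; case: (Hs) => Hsym Hl; split.
  by move=> x y; rewrite !edge_del Hsym; case: (x != v); case: (y != v).
by move=> x; rewrite edge_del (negbTE (Hl x)) !andbF.
Qed.

Lemma simple_con (T : finType) (G : graph T) u v : edge G u v -> simple_graph G ->
  simple_graph (contract_edge G u v).
Proof.
move=> Huv Hs; have Hv : v \in verts G by case/and3P: Huv.
split; last by move=> x; rewrite edge_con eqxx /= !andbF.
move=> a c; rewrite !edge_con.
case Ha: (a \in verts G); case Hc: (c \in verts G); rewrite ?andbF //=.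
rewrite (adj_sym Hs Ha Hc) (adj_sym Hs Hv Hc) (adj_sym Hs Ha Hv) [a == c]eq_sym.
by case: (a == v); case: (c == v); case: (c == a); case: (a == u); case: (c == u);
   case: (adj G c a); case: (adj G c v); case: (adj G v a).
Qed.

Lemma step_dtw (T : finType) (G G' : graph T) : minor_step G G' -> simple_graph G ->
  simple_graph G' /\ (forall m, dtw_le G m -> dtw_le G' m).
Proof.
case=> [v Hv|u v Huv] Hs.
  split; first exact: simple_del.
  move=> m Hle D' HD'; apply: (del_dtw Hs HD'); apply: Hle; exact: delD_orient.
split; first exact: simple_con.
move=> m Hle D' HD'.
case E: [exists y, D' y u && edge G y v].
  have Htb : (v = u /\ u = v) \/ (v = v /\ u = u) by right.
  have Htop : (v == v) = [exists y, D' y u && edge G y v] by rewrite E eqxx.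
  apply: (con_dtw Huv Hs HD' Htb Htop); apply: Hle; exact: conD_orient.
have Htb : (u = u /\ v = v) \/ (u = v /\ v = u) by left.
have Htop : (u == v) = [exists y, D' y u && edge G y v] by rewrite E (negbTE (Hneq Huv Hs)).
apply: (con_dtw Huv Hs HD' Htb Htop); apply: Hle; exact: conD_orient.
Qed.

Lemma seq_dtw (T : finType) (G G'' : graph T) : del_con_seq G G'' -> simple_graph G ->
  forall m, dtw_le G m -> dtw_le G'' m.
Proof.
elim=> [//|{}G G' {}G'' Hst _ IH] Hs m Hle.
have [Hs' H'] := step_dtw Hst Hs.
exact: IH Hs' m (H' m Hle).
Qed.

Lemma iso_le (U T : finType) (I : graph U) (H : graph T) m :
  graph_iso I H -> dtw_le H m -> dtw_le I m.
Proof.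
case=> phi [Hinj Him Hed] Hle DI HDI.
apply: (iso_dtw Hinj Him HDI); apply: Hle; exact: DH_orient.
Qed.

Lemma dtw_spec (T : finType) (G : graph T) : dtw_le G (dtw G).
Proof.
rewrite /dtw; case: ex_minnP => k; rewrite /dtw_leb.
by case: excluded_middle_informative.
Qed.

Lemma dtw_min (T : finType) (G : graph T) m : dtw_le G m -> dtw G <= m.
Proof.
move=> H; rewrite /dtw; case: ex_minnP => k _ Hmin; apply: Hmin.
by rewrite /dtw_leb; case: excluded_middle_informative.
Qed.

Theorem mainTheorem16 (U T : finType) (I : graph U) (H : graph T) :
  simple_graph H -> simple_graph I -> induced_minor I H ->
  dtw I <= dtw H.
Proof.
move=> HsH _ [H' [Hseq Hiso]].
apply: dtw_min; apply: (iso_le Hiso); apply: (seq_dtw Hseq HsH).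
exact: dtw_spec.
Qed.
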